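(* Let $(p_n)_{n\ge1}$ be a strictly increasing sequence of odd primes and let $G=\big\langle \frac{1}{2^np_n} : n\in\mathbb N\big\rangle$ be the additive submonoid of $\mathbb Q_{\ge0}$ they generate. Then $\mathcal A(G)=\{\frac1{2^np_n}: n\in\mathbb N\}$, and $G$ is neither a BFM nor an IDF monoid.
   Context: Monoids are commutative, cancellative, with identity, written additively. $\mathcal A(G)$ is the set of atoms (nonunits not expressible as a sum of two nonunits). $G$ is a BFM if every element is a finite sum of atoms and has only finitely many factorization lengths; $G$ is IDF if every element is divisible (in $G$) by only finitely many atoms. *)

(* Defs.v *)
From mathcomp Require Import all_boot all_order all_algebra.
Set Implicit Arguments. Unset Strict Implicit. Unset Printing Implicit Defensive.
Import Order.TTheory GRing.Theory Num.Theory.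
Local Open Scope ring_scope.

Definition gen (p : nat -> nat) (n : nat) : rat := ((2 ^ n * p n)%N%:R)^-1.

(* G = <1/(2^n p_n) : n >= 1>: the finite N-combinations (sums of a finite
   multiset of generators, empty sum = 0). *)
Definition inG (p : nat -> nat) (x : rat) : Prop :=
  exists s : seq nat, all (fun n => 0 < n)%N s /\ x = \sum_(n <- s) gen p n.

Definition is_unit (M : rat -> Prop) (u : rat) : Prop :=
  M u /\ exists v, M v /\ u + v = 0.

Definition is_atom (M : rat -> Prop) (a : rat) : Prop :=
  M a /\ ~ is_unit M a /\
  ~ (exists b c, M b /\ M c /\ ~ is_unit M b /\ ~ is_unit M c /\ a = b + c).

Definition is_factorization (M : rat -> Prop) (x : rat) (s : seq rat) : Prop :=
  (forall a, a \in s -> is_atom M a) /\ x = \sum_(a <- s) a.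

Definition BFM (M : rat -> Prop) : Prop :=
  forall x, M x ->
    (exists s, is_factorization M x s) /\
    (exists L : seq nat, forall s, is_factorization M x s -> size s \in L).

Definition divides_in (M : rat -> Prop) (a x : rat) : Prop :=
  exists y, M y /\ x = a + y.

Definition IDF (M : rat -> Prop) : Prop :=
  forall x, M x ->
    exists l : seq rat, forall a, is_atom M a -> divides_in M a x -> a \in l.

(* Main.v *)
Require Import Defs.
From mathcomp Require Import all_boot all_order all_algebra.
From mathcomp Require Import lra.
Import Order.TTheory GRing.Theory Num.Theory.
Local Open Scope ring_scope.

Lemma gen_ge0 p n : 0 <= gen p n.
Proof. by rewrite /gen invr_ge0 ler0n. Qed.

Lemma sum_ge0 p (s : seq nat) : 0 <= \sum_(n <- s) gen p n.
Proof. by apply: sumr_ge0 => i _; apply: gen_ge0. Qed.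

Lemma pos_m p n (hprime : forall n : nat, (1 <= n)%N -> prime (p n) /\ odd (p n)) :
  (1 <= n)%N -> (0 < 2 ^ n * p n)%N.
Proof.
move=> hn; rewrite muln_gt0 expn_gt0 /=; case: (hprime n hn) => /prime_gt0 -> //.
Qed.

Lemma gen_gt0 p n (hprime : forall n : nat, (1 <= n)%N -> prime (p n) /\ odd (p n)) :
  (1 <= n)%N -> 0 < gen p n.
Proof. by move=> hn; rewrite /gen invr_gt0 ltr0n pos_m. Qed.

Lemma sum_gt0 p (s : seq nat) (hprime : forall n : nat, (1 <= n)%N -> prime (p n) /\ odd (p n)) :
  all (fun n => 0 < n)%N s -> s != [::] -> 0 < \sum_(n <- s) gen p n.
Proof.
case: s => [//|k s] /= /andP [hk _] _; rewrite big_cons.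
have := gen_gt0 p k hprime hk; have := sum_ge0 p s; lra.
Qed.

Lemma inG_ge0 p x : inG p x -> 0 <= x.
Proof. by case=> s [_ ->]; apply: sum_ge0. Qed.

Lemma unit_iff p u : is_unit (inG p) u <-> u = 0.
Proof.
split.
  case=> /inG_ge0 hu [v [/inG_ge0 hv e]]; lra.
move=> ->; split; first by exists [::]; rewrite big_nil.
by exists 0; split; [exists [::]; rewrite big_nil | rewrite addr0].
Qed.

Lemma mul_sum p (D : nat) (s : seq nat) :
  (forall k, k \in s -> (2 ^ k * p k %| D)%N) ->
  (forall k, k \in s -> (0 < 2 ^ k * p k)%N) ->
  D%:R * \sum_(k <- s) gen p k = (\sum_(k <- s) (D %/ (2 ^ k * p k)))%:R.
Proof.
elim: s => [|k s IH] H1 H2; first by rewrite !big_nil mulr0.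
rewrite !big_cons mulrDr natrD IH; last 2 first.
- by move=> j hj; apply: H1; rewrite inE hj orbT.
- by move=> j hj; apply: H2; rewrite inE hj orbT.
congr (_ + _); rewrite /gen.
have hd := H1 k (mem_head _ _); have hp := H2 k (mem_head _ _).
rewrite -{1}(divnK hd) natrM mulfK // pnatr_eq0 -lt0n //.
Qed.

Lemma key p n (s : seq nat)
  (hprime : forall n : nat, (1 <= n)%N -> prime (p n) /\ odd (p n))
  (hincr : forall m n : nat, (1 <= m)%N -> (m < n)%N -> (p m < p n)%N) :
  (1 <= n)%N -> all (fun n => 0 < n)%N s ->
  \sum_(k <- s) gen p k = gen p n -> (size s <= 1)%N.
Proof.
move=> hn hs e.
case: (boolP (n \in s)) => ns.
  move: e; rewrite (big_rem n) //= => e.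
  have e0 : \sum_(y <- rem n s) gen p y = 0 by lra.
  have hr : all (fun n => 0 < n)%N (rem n s).
    by apply/allP => x /mem_rem hx; move/allP: hs; apply.
  case: (boolP (rem n s == [::])) => [/eqP hr0|hr0].
    by rewrite (perm_size (perm_to_rem ns)) /= hr0.
  by have := sum_gt0 p (rem n s) hprime hr hr0; rewrite e0 ltxx.
exfalso.
set D := (\prod_(k <- s) (2 ^ k * p k))%N.
have hdiv : forall k, k \in s -> (2 ^ k * p k %| D)%N.
  by move=> k hk; rewrite /D (big_rem k) //= dvdn_mulr.
have hpos : forall k, k \in s -> (0 < 2 ^ k * p k)%N.
  by move=> k hk; apply: pos_m => //; move/allP: hs; apply.
have := mul_sum p D s hdiv hpos; rewrite e /gen.
set N := (\sum_(_ <- _) _)%N => e2.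
have e3 : (D%:R : rat) = N%:R * (2 ^ n * p n)%:R.
  rewrite -e2 mulfVK // pnatr_eq0 -lt0n pos_m //.
move/eqP: e3; rewrite -natrM eqr_nat => /eqP e4.
have [pr od] := hprime n hn.
have : (p n %| D)%N by rewrite e4 dvdn_mull // dvdn_mull.
rewrite /D Euclid_dvd_prod // big_has => /hasP [k ks].
have hk : (1 <= k)%N by move/allP: hs; apply.
have [prk _] := hprime k hk.
rewrite Euclid_dvdM // Euclid_dvdX // !dvdn_prime2 //.
case/orP => [/andP [h2 _]|/eqP epk].
  by move: od; rewrite (eqP h2).
have nk : n != k by apply: contraNneq ns => ->.
case: (ltngtP n k) => h.
- by have := hincr _ _ hn h; rewrite epk ltnn.
- by have := hincr _ _ hk h; rewrite epk ltnn.
- by move: nk; rewrite h eqxx.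
Qed.

Lemma sum_nseq p m n : \sum_(k <- nseq m n) gen p k = gen p n *+ m.
Proof. by elim: m => [|m IH]; rewrite ?big_nil ?mulr0n //= big_cons IH mulrS. Qed.

Lemma sum_nseq_r m (x : rat) : \sum_(k <- nseq m x) k = x *+ m.
Proof. by elim: m => [|m IH]; rewrite ?big_nil ?mulr0n //= big_cons IH mulrS. Qed.

Lemma all_nseq m n : (1 <= n)%N -> all (fun n => 0 < n)%N (nseq m n).
Proof. by move=> hn; apply/allP => x /nseqP [-> _]. Qed.

Lemma gen_full p n (hprime : forall n : nat, (1 <= n)%N -> prime (p n) /\ odd (p n)) :
  (1 <= n)%N -> gen p n *+ (2 ^ n * p n) = 1.
Proof.
move=> hn; rewrite -mulr_natr /gen mulVf // pnatr_eq0 -lt0n pos_m //.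
Qed.

Lemma one_inG p (hprime : forall n : nat, (1 <= n)%N -> prime (p n) /\ odd (p n)) :
  inG p 1.
Proof.
exists (nseq (2 ^ 1 * p 1) 1%N); split; first exact: all_nseq.
by rewrite sum_nseq gen_full.
Qed.

Lemma sumn_ge (L : seq nat) x : x \in L -> (x <= sumn L)%N.
Proof.
elim: L => //= y L IH; rewrite inE => /orP [/eqP ->|/IH h]; first exact: leq_addr.
exact: leq_trans h (leq_addl _ _).
Qed.

Theorem mainTheorem8 (p : nat -> nat)
  (hprime : forall n : nat, (1 <= n)%N -> prime (p n) /\ odd (p n))
  (hincr : forall m n : nat, (1 <= m)%N -> (m < n)%N -> (p m < p n)%N) :
  (forall a : rat, is_atom (inG p) a <-> exists n : nat, (1 <= n)%N /\ a = gen p n)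
  /\ ~ BFM (inG p) /\ ~ IDF (inG p).
Proof.
have atom_gen : forall n, (1 <= n)%N -> is_atom (inG p) (gen p n).
  move=> n hn; split; first by exists [:: n]; rewrite /= hn big_seq1.
  split.
    by move/unit_iff => e; have := gen_gt0 p n hprime hn; rewrite e ltxx.
  case=> b [c [[s1 [h1 ->]] [[s2 [h2 ->]] [nb [nc e]]]]].
  have s1n : s1 != [::] by apply/eqP => e1; apply: nb; rewrite e1 big_nil unit_iff.
  have s2n : s2 != [::] by apply/eqP => e1; apply: nc; rewrite e1 big_nil unit_iff.
  have := key p n (s1 ++ s2) hprime hincr hn.
  rewrite all_cat h1 h2 big_cat /= -e size_cat => /(_ isT erefl).
  by move: s1n s2n; clear; case: s1 => [|? ?]; case: s2 => [|? ?] => // _ _; rewrite /= addnS.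
split.
  move=> a; split; last by case=> n [hn ->]; apply: atom_gen.
  case=> [[s [hs ea]] [na nsplit]].
  case: s hs ea => [|k s] hs ea.
    by exfalso; apply: na; rewrite ea big_nil unit_iff.
  move: hs => /= /andP [hk hs].
  case: s hs ea => [|j s] hs ea.
    by exists k; split => //; rewrite ea big_seq1.
  exfalso; apply: nsplit; exists (gen p k), (\sum_(i <- j :: s) gen p i).
  split; first by exists [:: k]; rewrite /= hk big_seq1.
  split; first by exists (j :: s).
  split; first by rewrite unit_iff => e; have := gen_gt0 p k hprime hk; rewrite e ltxx.
  split; first by rewrite unit_iff => e; have := sum_gt0 p (j :: s) hprime hs isT; rewrite e ltxx.
  by rewrite ea big_cons.
split.
  move=> H; have [_ [L HL]] := H 1 (one_inG p hprime).
  set n := (sumn L).+1.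
  have hn : (1 <= n)%N by [].
  have hf : is_factorization (inG p) 1 (nseq (2 ^ n * p n) (gen p n)).
    split; last by rewrite sum_nseq_r gen_full.
    by move=> a /nseqP [-> _]; apply: atom_gen.
  have := HL _ hf.
  rewrite size_nseq => /sumn_ge.
  have h1 : (n < 2 ^ n)%N by apply: ltn_expl.
  have [pr _] := hprime n hn.
  have h2 : (2 ^ n <= 2 ^ n * p n)%N by rewrite leq_pmulr // prime_gt0.
  rewrite /n in h1 h2 *; move=> h3.
  by have := leq_trans h1 (leq_trans h2 h3); rewrite leqNgt ltnS leqnSn.
move=> H; have [l Hl] := H 1 (one_inG p hprime).
have ginj : {in [pred i : nat | (1 <= i)%N] &, injective (gen p)}.
  move=> i j hi hj; rewrite /gen => /invr_inj /eqP; rewrite eqr_nat => /eqP e.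
  have mono : forall i j, (1 <= i)%N -> (i < j)%N -> (2 ^ i * p i < 2 ^ j * p j)%N.
    by move=> i' j' hi' hij; apply: ltn_mul; [rewrite ltn_exp2l | apply: hincr].
  case: (ltngtP i j) => // h.
  - by have := mono _ _ hi h; rewrite e ltnn.
  - by have := mono _ _ hj h; rewrite e ltnn.
have hu : uniq (map (gen p) (iota 1 (size l).+1)).
  rewrite map_inj_in_uniq ?iota_uniq //.
  by move=> i j; rewrite !mem_iota => /andP [hi _] /andP [hj _]; apply: ginj.
have hsub : {subset map (gen p) (iota 1 (size l).+1) <= l}.
  move=> x /mapP [n]; rewrite mem_iota => /andP [hn _] ->.
  apply: Hl; first exact: atom_gen.
  exists (gen p n *+ (2 ^ n * p n).-1); split.
    exists (nseq (2 ^ n * p n).-1 n); split; first exact: all_nseq.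
    by rewrite sum_nseq.
  rewrite -mulrS prednK ?pos_m // gen_full //.
have := uniq_leq_size hu hsub.
by rewrite size_map size_iota ltnn.
Qed.
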